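(* Let $\mathcal W$ be a differentially connected covering equation of the Gibbons–Tsarev equation, with total derivatives $\tilde D_x,\tilde D_y$ (differentially connected: every smooth function $h$ on $\mathcal W$ with $\tilde D_x h=\tilde D_y h=0$ is constant). Let $\psi^{(k)}$, $\varphi^{(k)}$ ($k\ge1$) be smooth functions on $\mathcal W$ and consider the formal series $$\psi(\lambda)=\lambda+\sum_{k\ge1}\psi^{(k)}\lambda^{-k},\qquad \varphi(\lambda)=\frac1\lambda+\sum_{k\ge1}\varphi^{(k)}\lambda^k .$$ Consider the conditions: (1) $\tilde D_x\psi=\dfrac{\psi'}{\lambda^2-z_x\lambda-z_y}$ and $\tilde D_y\psi=\dfrac{(\lambda-z_x)\psi'}{\lambda^2-z_x\lambda-z_y}$ (as series in $\lambda^{-1}$, $\psi'=d\psi/d\lambda$); (2) $\tilde D_x\varphi=-\dfrac1{\varphi^2-z_x\varphi-z_y}$ and $\tilde D_y\varphi=-\dfrac{\varphi-z_x}{\varphi^2-z_x\varphi-z_y}$ (as series in $\lambda$); (3) every coefficient of the Laurent series $\psi(\varphi(\lambda))$ in $\lambda$ is a constant, i.e. $\psi(\varphi(\lambda))=c(\lambda)$ with $c$ independent of the point of $\mathcal W$. Then any two of the conditions (1), (2), (3) imply the remaining one.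
   Context: The Gibbons–Tsarev equation is $z_{yy}+z_xz_{xy}-z_yz_{xx}+1=0$; $z_x,z_y$ are regarded as functions on $\mathcal W$ via the covering projection. $\tilde D_x,\tilde D_y$ act on formal series coefficientwise. The composition $\psi(\varphi(\lambda))=\varphi(\lambda)+\sum_{k\ge1}\psi^{(k)}\varphi(\lambda)^{-k}$ is a well-defined formal Laurent series in $\lambda$ since $1/\varphi(\lambda)$ is a power series in $\lambda$ without constant term; $\psi'(\varphi)$ likewise denotes the composition of $\psi'$ with $\varphi$. *)

(* Defs.v *)
From mathcomp Require Import all_boot all_algebra.
From mathcomp Require Import functions reals.
Set Implicit Arguments. Unset Strict Implicit. Unset Printing Implicit Defensive.
Import GRing.Theory Num.Theory.
Local Open Scope ring_scope.

Section Series.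
Variable K : comPzRingType.

Definition ps1 : nat -> K := fun n => if n == 0%N then 1 else 0.
Definition psmul (f g : nat -> K) : nat -> K :=
  fun n => \sum_(i < n.+1) f i * g (n - i)%N.
Definition pspow (f : nat -> K) (j : nat) : nat -> K := iter j (psmul f) ps1.
(* inverse of the power series 1 + u, where u has no constant term:
   (1 + u)^-1 = sum_j (-u)^j, the sum being finite coefficientwise *)
Definition psinv1 (u : nat -> K) : nat -> K :=
  fun n => \sum_(j < n.+1) pspow (fun i => - u i) j n.

(* Formal Laurent series  sum_{k>=0} lcoef k * X^(lval + k)           *)
Record lser := LS { lval : int; lcoef : nat -> K }.

Definition coef (s : lser) (n : int) : K :=
  match (n - lval s)%R with Posz k => lcoef s k | Negz _ => 0 end.

Definition lseq (s t : lser) : Prop := forall n : int, coef s n = coef t n.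

Definition lconst (a : K) : lser := LS 0 (fun k => if k == 0%N then a else 0).
Definition lX (m : int) : lser := LS m ps1.
Definition ladd (s t : lser) : lser :=
  let v := if lval s <= lval t then lval s else lval t in
  LS v (fun k => coef s (v + k%:Z) + coef t (v + k%:Z)).
Definition lopp (s : lser) : lser := LS (lval s) (fun k => - lcoef s k).
Definition lsub (s t : lser) : lser := ladd s (lopp t).
Definition lscale (a : K) (s : lser) : lser := LS (lval s) (fun k => a * lcoef s k).
Definition lmul (s t : lser) : lser := LS (lval s + lval t) (psmul (lcoef s) (lcoef t)).
Definition lone : lser := lX 0.
Definition lpow (s : lser) (n : nat) : lser := iter n (lmul s) lone.
(* multiplicative inverse of a Laurent series whose leading coefficient
   (lcoef s 0) equals 1; only used on such series *)
Definition linv_monic (s : lser) : lser :=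
  LS (- lval s) (psinv1 (fun k => if k == 0%N then 0 else lcoef s k)).
Definition lpowz (s : lser) (m : int) : lser :=
  match m with Posz n => lpow s n | Negz n => lpow (linv_monic s) n.+1 end.
Definition lder (s : lser) : lser :=
  LS (lval s - 1) (fun k => lcoef s k *~ (lval s + k%:Z)).
(* composition f(g) = sum_k lcoef f k * g^(lval f + k), for g with
   valuation 1 and leading coefficient 1 (so that negative powers of g
   make sense and the sum is finite coefficientwise) *)
Definition lcomp (f g : lser) : lser :=
  LS (lval f) (fun j => \sum_(k < j.+1)
         lcoef f k * coef (lpowz g (lval f + k%:Z)) (lval f + j%:Z)).
End Series.

Definition lmapc (K L : comPzRingType) (D : K -> L) (s : lser K) : lser L :=
  LS (lval s) (fun k => D (lcoef s k)).

(*   z_yy + z_x z_xy - z_y z_xx + 1 = 0                               *)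
(* The covering equation W is represented by its algebra of smooth     *)
(* functions (a predicate [smooth] on W -> R) and its total derivatives *)
(* Dx, Dy: commuting derivations of the smooth functions, killing       *)
(* constants; z, z_x, z_y are functions on W (pulled back along the     *)
(* covering projection) with Dx z = z_x, Dy z = z_y, and the GT relation *)
(* holds with z_xx = Dx z_x, z_xy = Dx z_y (= Dy z_x), z_yy = Dy z_y.   *)
Definition is_derivation (R : realType) (W : Type)
    (smooth : (W -> R) -> Prop) (D : (W -> R) -> (W -> R)) : Prop :=
  [/\ forall f, smooth f -> smooth (D f),
      forall c : R, D (fun _ => c) = 0,
      forall f g, smooth f -> smooth g -> D (f + g) = D f + D g &
      forall f g, smooth f -> smooth g -> D (f * g) = D f * g + f * D g].

Definition GT_covering (R : realType) (W : Type)
    (smooth : (W -> R) -> Prop) (Dx Dy : (W -> R) -> (W -> R))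
    (z zx zy : W -> R) : Prop :=
  [/\ (forall c : R, smooth (fun _ => c)),
      (forall f g, smooth f -> smooth g ->
          [/\ smooth (f + g), smooth (- f) & smooth (f * g)]),
      is_derivation smooth Dx /\ is_derivation smooth Dy,
      (forall f, smooth f -> Dx (Dy f) = Dy (Dx f)) &
      [/\ smooth z, smooth zx, smooth zy,
          Dx z = zx /\ Dy z = zy &
          Dy zy + zx * Dx zy - zy * Dx zx + 1 = 0]].

Definition diff_connected (R : realType) (W : Type)
    (smooth : (W -> R) -> Prop) (Dx Dy : (W -> R) -> (W -> R)) : Prop :=
  forall h, smooth h -> Dx h = 0 -> Dy h = 0 -> exists c : R, h = (fun _ => c).

Definition shape (R : realType) (W : Type) (a : nat -> W -> R) : nat -> (W -> R) :=
  fun j => match j with 0%N => 1 | 1%N => 0 | S k => a k end.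

(* psi(lambda) = lambda + sum_{k>=1} psi^(k) lambda^-k, written as a
   Laurent series in X = lambda^-1 :  X^-1 + sum_{k>=1} psi^(k) X^k *)
Definition psiS (R : realType) (W : Type) (psi : nat -> W -> R) : lser (W -> R) :=
  LS (-1) (shape psi).
(* phi(lambda) = 1/lambda + sum_{k>=1} phi^(k) lambda^k, a Laurent series
   in X = lambda *)
Definition phiS (R : realType) (W : Type) (phi : nat -> W -> R) : lser (W -> R) :=
  LS (-1) (shape phi).

(* d/dlambda of a series in X = lambda^-1 :  d/dlambda = - X^2 d/dX *)
Definition dlam (K : comPzRingType) (s : lser K) : lser K :=
  lopp (lmul (lX K 2) (lder s)).

Section Conditions.
Variables (R : realType) (W : Type) (Dx Dy : (W -> R) -> (W -> R)) (zx zy : W -> R).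

(* condition (1), series in X = lambda^-1;
   lambda^2 - z_x lambda - z_y = X^-2 - z_x X^-1 - z_y *)
Definition cond1 (psi : nat -> W -> R) : Prop :=
  let den := ladd (lX _ (-2)) (ladd (lscale (- zx) (lX _ (-1))) (lconst (- zy))) in
  let dpsi := dlam (psiS psi) in
  lseq (lmapc Dx (psiS psi)) (lmul dpsi (linv_monic den)) /\
  lseq (lmapc Dy (psiS psi))
       (lmul (lmul (lsub (lX _ (-1)) (lconst zx)) dpsi) (linv_monic den)).

Definition cond2 (phi : nat -> W -> R) : Prop :=
  let p := phiS phi in
  let den := ladd (lmul p p) (ladd (lscale (- zx) p) (lconst (- zy))) in
  lseq (lmapc Dx p) (lopp (linv_monic den)) /\
  lseq (lmapc Dy p) (lopp (lmul (lsub p (lconst zx)) (linv_monic den))).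

(* condition (3): psi(phi(lambda)) = psi^(X := 1/phi(lambda)) has constant
   coefficients *)
Definition cond3 (psi phi : nat -> W -> R) : Prop :=
  forall n : int, exists c : R,
    coef (lcomp (psiS psi) (linv_monic (phiS phi))) n = (fun _ => c).
End Conditions.

(* Main.v *)
From HB Require Import structures.
Require Import Defs.
From mathcomp Require Import all_boot all_algebra.
From mathcomp Require Import boolp classical_sets functions reals.
From mathcomp Require Import ring zify.
Set Implicit Arguments. Unset Strict Implicit. Unset Printing Implicit Defensive.
Import GRing.Theory Num.Theory.
Local Open Scope ring_scope.
Section FPS.
Variable K : comNzRingType.

Record fps := FPS { fc : nat -> K }.

HB.instance Definition _ := gen_eqMixin fps.
HB.instance Definition _ := gen_choiceMixin fps.

Lemma fps_ext (f g : fps) : (forall n, fc f n = fc g n) -> f = g.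
Proof. case: f; case: g => g f /= H; congr FPS; exact: funext. Qed.

Definition fadd (f g : fps) := FPS (fun n => fc f n + fc g n).
Definition fopp (f : fps) := FPS (fun n => - fc f n).
Definition fzero := FPS (fun _ => 0).
Definition fone := FPS (ps1 K).
Definition fmul (f g : fps) := FPS (psmul (fc f) (fc g)).

Lemma faddA : associative fadd.
Proof. by move=> f g h; apply: fps_ext => n /=; rewrite addrA. Qed.
Lemma faddC : commutative fadd.
Proof. by move=> f g; apply: fps_ext => n /=; rewrite addrC. Qed.
Lemma fadd0 : left_id fzero fadd.
Proof. by move=> f; apply: fps_ext => n /=; rewrite add0r. Qed.
Lemma faddN : left_inverse fzero fopp fadd.
Proof. by move=> f; apply: fps_ext => n /=; rewrite addNr. Qed.

HB.instance Definition _ := GRing.isZmodule.Build fps faddA faddC fadd0 faddN.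

Definition PP (N : nat) (f : nat -> K) : {poly K} := \poly_(i < N) f i.

Lemma psmulE {N} f g n : (n < N)%N -> psmul f g n = (PP N f * PP N g)`_n.
Proof.
move=> nN; rewrite coefM /psmul; apply: eq_bigr => i _.
rewrite !coef_poly (leq_ltn_trans (leq_subr _ _) nN).
by rewrite (leq_ltn_trans _ nN) // -ltnS.
Qed.

Lemma coefM_lowr (p q q' : {poly K}) n :
  (forall i, (i <= n)%N -> q`_i = q'`_i) -> (p * q)`_n = (p * q')`_n.
Proof. by move=> H; rewrite !coefM; apply: eq_bigr => i _; rewrite H // leq_subr. Qed.

Lemma coefM_lowl (p q q' : {poly K}) n :
  (forall i, (i <= n)%N -> q`_i = q'`_i) -> (q * p)`_n = (q' * p)`_n.
Proof. by move=> H; rewrite ![_ * p]mulrC; exact: coefM_lowr. Qed.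

Lemma PP_psmul_low f g n i : (i <= n)%N ->
  (PP n.+1 (psmul f g))`_i = (PP n.+1 f * PP n.+1 g)`_i.
Proof. by move=> ni; rewrite coef_poly ltnS ni (psmulE (N := n.+1) _ _ ni). Qed.

Lemma fmulA : associative fmul.
Proof.
move=> f g h; apply: fps_ext => n /=.
rewrite !(psmulE _ _ (ltnSn n)).
rewrite (coefM_lowr _ (q' := PP n.+1 (fc g) * PP n.+1 (fc h))); last by move=> i ni; exact: (PP_psmul_low (fc g) (fc h) ni).
rewrite [RHS](coefM_lowl _ (q' := PP n.+1 (fc f) * PP n.+1 (fc g))); last by move=> i ni; exact: (PP_psmul_low (fc f) (fc g) ni).
by rewrite mulrA.
Qed.

Lemma fmulC : commutative fmul.
Proof.
by move=> f g; apply: fps_ext => n /=; rewrite !(psmulE _ _ (ltnSn n)) mulrC.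
Qed.

Lemma fmul1 : left_id fone fmul.
Proof.
move=> f; apply: fps_ext => n /=; rewrite /psmul big_ord_recl /ps1 /= mul1r subn0.
by rewrite big1 ?addr0 // => i _; rewrite mul0r.
Qed.

Lemma fmulDl : left_distributive fmul fadd.
Proof.
move=> f g h; apply: fps_ext => n /=; rewrite /psmul -big_split /=.
by apply: eq_bigr => i _; rewrite mulrDl.
Qed.

Lemma fone_neq0 : fone != fzero.
Proof.
apply/eqP => /(congr1 (fun f => fc f 0%N)) /= /eqP.
by rewrite /ps1 /= oner_eq0.
Qed.

HB.instance Definition _ := GRing.Zmodule_isComNzRing.Build fps fmulA fmulC fmul1 fmulDl fone_neq0.

Lemma fcD f g n : fc (f + g) n = fc f n + fc g n. Proof. by []. Qed.
Lemma fcN f n : fc (- f) n = - fc f n. Proof. by []. Qed.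
Lemma fcB f g n : fc (f - g) n = fc f n - fc g n. Proof. by []. Qed.
Lemma fc0 n : fc 0 n = 0. Proof. by []. Qed.
Lemma fc1 n : fc 1 n = (n == 0%N)%:R.
Proof. by rewrite /= /ps1; case: (n == 0%N). Qed.
Lemma fcM f g n : fc (f * g) n = \sum_(i < n.+1) fc f i * fc g (n - i).
Proof. by []. Qed.

Lemma fc_sum I (r : seq I) (P : pred I) (F : I -> fps) n :
  fc (\sum_(i <- r | P i) F i) n = \sum_(i <- r | P i) fc (F i) n.
Proof.
elim: r => [|x r IH]; first by rewrite !big_nil.
by rewrite !big_cons; case: (P x); rewrite ?fcD IH.
Qed.

Lemma fcMn f m n : fc (f *+ m) n = fc f n *+ m.
Proof. by elim: m => [|m IH]; rewrite ?mulr0n // !mulrS fcD IH. Qed.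

Lemma fcM_lowr (h f f' : fps) n :
  (forall i, (i <= n)%N -> fc f i = fc f' i) -> fc (h * f) n = fc (h * f') n.
Proof. by move=> H; rewrite !fcM; apply: eq_bigr => i _; rewrite H // leq_subr. Qed.

Lemma fcM_lowl (h f f' : fps) n :
  (forall i, (i <= n)%N -> fc f i = fc f' i) -> fc (f * h) n = fc (f' * h) n.
Proof. by move=> H; rewrite ![_ * h]mulrC; exact: fcM_lowr. Qed.

Definition fconst (c : K) := FPS (fun n => if n == 0%N then c else 0).
Definition fX := FPS (fun n => (n == 1%N)%:R).

Lemma fconstD a b : fconst (a + b) = fconst a + fconst b.
Proof. by apply: fps_ext => -[|n] /=; rewrite ?addr0. Qed.
Lemma fconstN a : fconst (- a) = - fconst a.
Proof. by apply: fps_ext => -[|n] /=; rewrite ?oppr0. Qed.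
Lemma fconst0 : fconst 0 = 0.
Proof. by apply: fps_ext => -[|n]. Qed.
Lemma fconst1 : fconst 1 = 1.
Proof. by apply: fps_ext => -[|n]. Qed.
Lemma fc_constM c f n : fc (fconst c * f) n = c * fc f n.
Proof.
rewrite fcM big_ord_recl /= subn0 big1 ?addr0 // => i _.
by rewrite mul0r.
Qed.
Lemma fconstM a b : fconst (a * b) = fconst a * fconst b.
Proof. by apply: fps_ext => n; rewrite fc_constM /=; case: (n == 0%N); rewrite ?mulr0. Qed.
Lemma fconstMn a m : fconst (a *+ m) = fconst a *+ m.
Proof. by elim: m => [|m IH]; rewrite ?mulr0n ?fconst0 // !mulrS fconstD IH. Qed.

Lemma fc_X_mul f n : fc (fX * f) n = if n is m.+1 then fc f m else 0.
Proof.
rewrite fcM; case: n => [|n]; first by rewrite big_ord_recl big_ord0 /= mul0r addr0.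
rewrite big_ord_recl big_ord_recl /= mul0r add0r mul1r subSS subn0.
by rewrite big1 ?addr0 // => i _; rewrite mul0r.
Qed.

Lemma fc_Xn_mul k f n : fc (fX ^+ k * f) n = if (k <= n)%N then fc f (n - k) else 0.
Proof.
elim: k n => [|k IH] n; first by rewrite expr0 mul1r subn0.
rewrite exprSr (mulrC _ fX) -mulrA fc_X_mul.
by case: n => [|n] //; rewrite IH ltnS subSS.
Qed.

Lemma fc_Xn k n : fc (fX ^+ k) n = (n == k)%:R.
Proof.
rewrite -[fX ^+ k]mulr1 fc_Xn_mul fc1; case: (leqP k n) => kn.
  by rewrite subn_eq0 eqn_leq kn andbT.
by rewrite (ltn_eqF kn).
Qed.


Lemma sum_trunc (F : nat -> K) a b : (a <= b)%N ->
  (forall j, (a <= j)%N -> (j < b)%N -> F j = 0) ->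
  \sum_(j < b) F j = \sum_(j < a) F j.
Proof.
move=> ab H; rewrite -!(big_mkord xpredT) (big_cat_nat (leq0n a) ab) /=.
rewrite [X in _ + X]big1_seq ?addr0 // => j /andP[_]; rewrite mem_index_iota => /andP[aj jb].
exact: H.
Qed.

Lemma fc_mul_pow_low (g c : fps) j n : fc g 0%N = 0 -> (n < j)%N ->
  fc (c * g ^+ j) n = 0.
Proof.
move=> g0; elim: j c n => [|j IH] c n // nj.
rewrite exprS mulrA (mulrC c) -mulrA fcM big1 // => i _.
case: i => [[|i]] Hi /=; first by rewrite g0 mul0r.
rewrite (_ : psmul _ _ _ = 0) ?mulr0 //; apply: IH; lia.
Qed.

Lemma fc_pow_low (g : fps) k n : fc g 0%N = 0 -> (n < k)%N -> fc (g ^+ k) n = 0.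
Proof. by move=> g0 nk; rewrite -[g ^+ k]mul1r fc_mul_pow_low. Qed.

Lemma fc_pow_diag (g : fps) k : fc g 0%N = 0 -> fc g 1%N = 1 -> fc (g ^+ k) k = 1.
Proof.
move=> g0 g1; elim: k => [|k IH]; first by rewrite expr0 fc1.
rewrite exprS fcM big_ord_recl /= g0 mul0r add0r big_ord_recl /= g1 mul1r subSS subn0 IH.
by rewrite big1 ?addr0 // => i _; rewrite fc_pow_low ?mulr0 //; have := ltn_ord i; rewrite /bump /=; lia.
Qed.

Definition fsinv (f : fps) := FPS (psinv1 (fun k => if k == 0%N then 0 else fc f k)).

Lemma pspowE (u : nat -> K) j : pspow u j = fc (FPS u ^+ j).
Proof. by elim: j => [|j IH] //=; rewrite exprS /= IH. Qed.

Lemma fsinvK (f : fps) : fc f 0%N = 1 -> f * fsinv f = 1.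
Proof.
move=> f0.
set u := FPS (fun k => if k == 0%N then 0 else fc f k).
have fE : f = 1 - (- u).
  by rewrite opprK; apply: fps_ext => -[|n] /=; rewrite ?f0 ?addr0 ?add0r.
have w0 : fc (- u) 0%N = 0 by rewrite fcN /= oppr0.
have invE n : fc (fsinv f) n = \sum_(j < n.+1) fc ((- u) ^+ j) n.
  by rewrite /= /psinv1; apply: eq_bigr => j _; rewrite pspowE.
apply: fps_ext => n.
rewrite (fcM_lowr _ (f' := \sum_(j < n.+1) (- u) ^+ j)); last first.
  move=> i ni; rewrite invE fc_sum [RHS](@sum_trunc (fun j => fc ((- u) ^+ j) i) i.+1) //.
  by move=> j ij jn; rewrite fc_pow_low.
have -> : f * \sum_(j < n.+1) (- u) ^+ j = 1 - (- u) ^+ n.+1.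
  by rewrite fE -opprB mulNr -subrX1 opprB.
by rewrite fcB fc_pow_low // subr0.
Qed.

Definition compf (f g : fps) :=
  FPS (fun n => \sum_(k < n.+1) fc f k * fc (g ^+ k) n).
Definition PF (N : nat) (f : fps) : {poly fps} := \poly_(k < N) fconst (fc f k).

Lemma PF_coef N f k : (k < N)%N -> (PF N f)`_k = fconst (fc f k).
Proof. by move=> kN; rewrite coef_poly kN. Qed.

Lemma fconst_sum I (r : seq I) (P : pred I) (F : I -> K) :
  fconst (\sum_(i <- r | P i) F i) = \sum_(i <- r | P i) fconst (F i).
Proof.
elim: r => [|x r IH]; first by rewrite !big_nil fconst0.
by rewrite !big_cons; case: (P x); rewrite ?fconstD IH.
Qed.

Section Comp.
Variable g : fps.
Hypothesis g0 : fc g 0%N = 0.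

Lemma fc_horner (q : {poly fps}) n :
  fc q.[g] n = \sum_(k < n.+1) fc (q`_k * g ^+ k) n.
Proof.
rewrite (@horner_coef_wide _ (maxn (size q) n.+1)) ?leq_maxl // fc_sum.
rewrite [LHS](@sum_trunc (fun j => fc (q`_j * g ^+ j) n) n.+1) ?leq_maxr //.
by move=> j nj _; rewrite fc_mul_pow_low.
Qed.

Lemma compf_coef (q : {poly fps}) f n :
  (forall k, (k <= n)%N -> q`_k = fconst (fc f k)) -> fc q.[g] n = fc (compf f g) n.
Proof.
move=> H; rewrite fc_horner; apply: eq_bigr => k _.
have kn : (k <= n)%N by rewrite -ltnS ltn_ord.
by rewrite H // fc_constM.
Qed.

Lemma compfM f f' : compf (f * f') g = compf f g * compf f' g.
Proof.
apply: fps_ext => n.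
rewrite -(@compf_coef (PF n.+1 f * PF n.+1 f')); last first.
  move=> k kn; rewrite coefM fcM fconst_sum; apply: eq_bigr => i _.
  by rewrite fconstM !PF_coef //; have := ltn_ord i; lia.
rewrite hornerM.
rewrite (fcM_lowl _ (f' := compf f g)); last first.
  by move=> i ni; apply: compf_coef => k ki; rewrite PF_coef //; lia.
rewrite (fcM_lowr _ (f' := compf f' g)) //.
by move=> i ni; apply: compf_coef => k ki; rewrite PF_coef //; lia.
Qed.

Lemma compfD f f' : compf (f + f') g = compf f g + compf f' g.
Proof.
by apply: fps_ext => n; rewrite fcD /= -big_split; apply: eq_bigr => k _; rewrite mulrDl.
Qed.

Lemma compfN f : compf (- f) g = - compf f g.
Proof.
apply: fps_ext => n; rewrite fcN /= -sumrN; apply: eq_bigr => k _.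
by rewrite mulNr.
Qed.

Lemma compfB f f' : compf (f - f') g = compf f g - compf f' g.
Proof. by rewrite compfD compfN. Qed.

Lemma compfC c : compf (fconst c) g = fconst c.
Proof.
apply: fps_ext => n; rewrite [LHS]/= big_ord_recl big1 => [|i _]; last by rewrite mul0r.
rewrite expr0 fc1 addr0.
by case: n => [|n]; rewrite /= ?mulr1 ?mulr0.
Qed.

Lemma compf1 : compf 1 g = 1.
Proof. by rewrite -fconst1 compfC. Qed.

Lemma compfX : compf fX g = g.
Proof.
apply: fps_ext => n; rewrite /=; case: n => [|n].
  by rewrite big_ord_recl big_ord0 /= mul0r addr0 g0.
rewrite big_ord_recl big_ord_recl /= mul0r add0r mul1r expr1 big1 ?addr0 //.
by move=> i _; rewrite mul0r.
Qed.

Lemma compfXn k : compf (fX ^+ k) g = g ^+ k.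
Proof. by elim: k => [|k IH]; rewrite ?compf1 // !exprS compfM compfX IH. Qed.

Lemma compf_inj f : fc g 1%N = 1 -> compf f g = 0 -> f = 0.
Proof.
move=> g1 H; apply: fps_ext; elim/ltn_ind => n IH.
have := congr1 (fun h => fc h n) H; rewrite /= big_ord_recr /= fc_pow_diag // mulr1.
by rewrite big1 ?add0r // => k _; rewrite IH ?mul0r.
Qed.

End Comp.

Section Der.
Variable S : K -> Prop.
Variable D : K -> K.
Hypothesis S0 : S 0.
Hypothesis S1 : S 1.
Hypothesis SD : forall x y, S x -> S y -> S (x + y).
Hypothesis SN : forall x, S x -> S (- x).
Hypothesis SM : forall x y, S x -> S y -> S (x * y).
Hypothesis DS : forall x, S x -> S (D x).
Hypothesis D0 : D 0 = 0.
Hypothesis D1 : D 1 = 0.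
Hypothesis DD : forall x y, S x -> S y -> D (x + y) = D x + D y.
Hypothesis DM : forall x y, S x -> S y -> D (x * y) = D x * y + x * D y.

Lemma S_sum I (r : seq I) (P : pred I) (F : I -> K) :
  (forall i, P i -> S (F i)) -> S (\sum_(i <- r | P i) F i).
Proof.
move=> H; elim: r => [|x r IH]; first by rewrite big_nil.
by rewrite big_cons; case: ifP => Px //; apply: SD => //; apply: H.
Qed.

Lemma D_sum I (r : seq I) (P : pred I) (F : I -> K) :
  (forall i, P i -> S (F i)) -> D (\sum_(i <- r | P i) F i) = \sum_(i <- r | P i) D (F i).
Proof.
move=> H; elim: r => [|x r IH]; first by rewrite !big_nil.
rewrite !big_cons; case: ifP => Px //.
by rewrite DD ?IH //; [apply: H | apply: S_sum].
Qed.

Lemma DN x : S x -> D (- x) = - D x.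
Proof.
move=> Sx; apply/eqP; rewrite -subr_eq0 opprK addrC -DD ?subrr ?D0 //.
exact: SN.
Qed.

Lemma SMn x m : S x -> S (x *+ m).
Proof. by move=> Sx; elim: m => [|m IH]; rewrite ?mulr0n // mulrS; apply: SD. Qed.

Lemma DMn x m : S x -> D (x *+ m) = D x *+ m.
Proof.
by move=> Sx; elim: m => [|m IH]; rewrite ?mulr0n ?D0 // !mulrS DD ?IH //; exact: SMn.
Qed.

Definition sm (f : fps) := forall n, S (fc f n).

Lemma sm0 : sm 0. Proof. by move=> n. Qed.
Lemma sm1 : sm 1. Proof. by move=> n; rewrite fc1; case: (n == 0%N). Qed.
Lemma smD f g : sm f -> sm g -> sm (f + g). Proof. by move=> Hf Hg n; apply: SD. Qed.
Lemma smN f : sm f -> sm (- f). Proof. by move=> Hf n; apply: SN. Qed.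
Lemma smB f g : sm f -> sm g -> sm (f - g). Proof. by move=> Hf Hg; apply: smD => //; apply: smN. Qed.
Lemma smM f g : sm f -> sm g -> sm (f * g).
Proof. by move=> Hf Hg n; rewrite fcM; apply: S_sum => i _; apply: SM. Qed.
Lemma smC c : S c -> sm (fconst c). Proof. by move=> Sc [|n]. Qed.
Lemma smX : sm fX. Proof. by move=> [|[|n]]. Qed.
Lemma smXn f k : sm f -> sm (f ^+ k).
Proof. move=> Hf; elim: k => [|k IH]; first by rewrite expr0; apply: sm1. by rewrite exprS; apply: smM. Qed.
Lemma smMn f k : sm f -> sm (f *+ k).
Proof. by move=> Hf n; rewrite fcMn; apply: SMn. Qed.
Lemma sm_sum I (r : seq I) (P : pred I) (F : I -> fps) :
  (forall i, P i -> sm (F i)) -> sm (\sum_(i <- r | P i) F i).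
Proof. by move=> H n; rewrite fc_sum; apply: S_sum => i Pi; apply: H. Qed.

Lemma sm_fsinv f : sm f -> sm (fsinv f).
Proof.
move=> Hf n; rewrite /= /psinv1; apply: S_sum => j _; rewrite pspowE.
apply: smXn => k /=; apply: SN; case: (k == 0%N) => //.
Qed.

Lemma sm_compf f g : sm f -> sm g -> sm (compf f g).
Proof.
move=> Hf Hg n; rewrite /=; apply: S_sum => k _; apply: SM => //.
exact: smXn.
Qed.

Definition Df (f : fps) := FPS (fun n => D (fc f n)).

Lemma smDf f : sm f -> sm (Df f). Proof. by move=> Hf n; apply: DS. Qed.
Lemma Df0 : Df 0 = 0. Proof. by apply: fps_ext => n /=; rewrite D0. Qed.
Lemma DfD f g : sm f -> sm g -> Df (f + g) = Df f + Df g.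
Proof. by move=> Hf Hg; apply: fps_ext => n /=; rewrite DD. Qed.
Lemma DfN f : sm f -> Df (- f) = - Df f.
Proof. by move=> Hf; apply: fps_ext => n /=; rewrite DN. Qed.
Lemma DfB f g : sm f -> sm g -> Df (f - g) = Df f - Df g.
Proof. by move=> Hf Hg; rewrite DfD ?DfN //; apply: smN. Qed.
Lemma DfM f g : sm f -> sm g -> Df (f * g) = Df f * g + f * Df g.
Proof.
move=> Hf Hg; apply: fps_ext => n; rewrite fcD !fcM /= D_sum; last by move=> i _; apply: SM.
by rewrite -big_split; apply: eq_bigr => i _ /=; rewrite DM.
Qed.
Lemma DfC c : Df (fconst c) = fconst (D c).
Proof. by apply: fps_ext => -[|n] //=. Qed.
Lemma Df1 : Df 1 = 0.
Proof. by apply: fps_ext => n; rewrite /= /ps1; case: (n == 0%N). Qed.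
Lemma DfXn k : Df (fX ^+ k) = 0.
Proof. by apply: fps_ext => n; rewrite /= fc_Xn; case: (n == k). Qed.
Lemma DfX : Df fX = 0.
Proof. by rewrite -[fX]expr1 DfXn. Qed.
Lemma Df_sum I (r : seq I) (P : pred I) (F : I -> fps) :
  (forall i, P i -> sm (F i)) -> Df (\sum_(i <- r | P i) F i) = \sum_(i <- r | P i) Df (F i).
Proof.
move=> H; elim: r => [|x r IH]; first by rewrite !big_nil Df0.
rewrite !big_cons; case: ifP => Px //.
by rewrite DfD ?IH //; [apply: H | apply: sm_sum].
Qed.

Lemma Df_inv f u : sm f -> sm u -> f * u = 1 -> Df u = - (u * u) * Df f.
Proof.
move=> Hf Hu fu.
have H0 : Df f * u + f * Df u = 0 by rewrite -DfM // fu Df1.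
apply/eqP; rewrite -subr_eq0.
have -> : Df u - - (u * u) * Df f = u * (Df f * u + f * Df u) + Df u * (1 - f * u) by ring.
by rewrite H0 fu subrr; apply/eqP; ring.
Qed.

Definition DPoly (q : {poly fps}) : {poly fps} := \poly_(i < size q) Df q`_i.

Lemma coef_DPoly q i : (DPoly q)`_i = Df q`_i.
Proof.
rewrite coef_poly; case: ltnP => // qi.
by rewrite nth_default // Df0.
Qed.

Lemma sm_horner (q : {poly fps}) g : (forall i, sm q`_i) -> sm g -> sm q.[g].
Proof.
move=> Hq Hg; rewrite horner_coef; apply: sm_sum => i _; apply: smM => //.
exact: smXn.
Qed.

Lemma Df_horner (q : {poly fps}) g : (forall i, sm q`_i) -> sm g ->
  Df q.[g] = (DPoly q).[g] + (q^`()).[g] * Df g.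
Proof.
move=> + Hg; elim/poly_ind: q => [|p c IH] Hq.
  by rewrite /DPoly size_poly0 poly_def big_ord0 deriv0 !horner0 mul0r addr0 Df0.
have Hp : forall i, sm p`_i.
  by move=> i; have := Hq i.+1; rewrite coefD coefMX coefC /= addr0.
have Hc : sm c by have := Hq 0%N; rewrite coefD coefMX coefC /= add0r.
have -> : DPoly (p * 'X + c%:P) = DPoly p * 'X + (Df c)%:P.
  apply/polyP => i; rewrite coef_DPoly !coefD !coefMX !coefC coef_DPoly.
  by case: i => [|i] /=; rewrite ?add0r ?addr0 ?Df0 // DfD ?Df0 ?addr0 //; apply: sm0.
rewrite derivMXaddC !hornerMXaddC hornerD hornerM hornerX DfD ?DfM ?IH //; last 2 first.
- exact: sm_horner.
- by apply: smM => //; exact: sm_horner.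
ring.
Qed.

Definition fder (f : fps) := FPS (fun k => fc f k.+1 *+ k.+1).

Lemma sm_fder f : sm f -> sm (fder f).
Proof. by move=> Hf n; apply: SMn. Qed.

Lemma sm_PF N f : sm f -> forall i, sm (PF N f)`_i.
Proof. by move=> Hf i; rewrite coef_poly; case: ifP => _; [apply: smC | apply: sm0]. Qed.

Lemma Df_compf f g : fc g 0%N = 0 -> sm f -> sm g ->
  Df (compf f g) = compf (Df f) g + compf (fder f) g * Df g.
Proof.
move=> g0 Hf Hg; apply: fps_ext => n.
have E1 : fc (compf f g) n = fc (PF n.+2 f).[g] n.
  by symmetry; apply: compf_coef => // k kn; rewrite PF_coef //; lia.
change (D (fc (compf f g) n) = fc (compf (Df f) g + compf (fder f) g * Df g) n); rewrite E1.
have -> : D (fc (PF n.+2 f).[g] n) = fc (Df (PF n.+2 f).[g]) n by [].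
rewrite Df_horner //; last exact: sm_PF.
rewrite !fcD.
congr (_ + _).
  apply: compf_coef => // k kn; rewrite coef_DPoly PF_coef ?DfC //; lia.
apply: fcM_lowl => i ni; apply: compf_coef => // k ki.
rewrite coef_deriv PF_coef; last by lia.
by rewrite -fconstMn.
Qed.


Lemma fc_fsinv0 f : fc (fsinv f) 0%N = 1.
Proof. by rewrite /= /psinv1 big_ord1. Qed.

Lemma fc_compf0 f g : fc (compf f g) 0%N = fc f 0%N.
Proof. by rewrite /= big_ord1 expr0 fc1 mulr1. Qed.

Lemma fc_Xmul0 f : fc (fX * f) 0%N = 0.
Proof. by rewrite fc_X_mul. Qed.

Lemma unit_cancel u x : fc u 0%N = 1 -> u * x = 0 -> x = 0.
Proof.
move=> u0 H; have := fsinvK u0 => H1.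
by rewrite -[x]mul1r -H1 mulrC mulrA (mulrC _ u) H mul0r.
Qed.

Section Core.
Variables (a b C d1 e r1 r2 : fps).
Hypothesis Ha0 : fc a 0%N = 1.
Hypothesis Hb0 : fc b 0%N = 1.
Hypothesis Hd0 : fc d1 0%N = 1.
Hypothesis sma : sm a.
Hypothesis smb : sm b.
Hypothesis smC : sm C.
Local Notation A := (fsinv a).
Local Notation gg := (fX * A).
Hypothesis HC : A * C = compf b gg.
Hypothesis E5 : a ^+ 2 * compf d1 gg = e.
Hypothesis E6 : compf r1 gg = A ^+ 3 * r2.

Definition P1 := d1 * Df b = r1 * (b - fX * fder b).
Definition P2 := e * Df a = - r2.
Definition P3 := Df C = 0.

Let E1 : a * A = 1. Proof. exact: fsinvK. Qed.
Let smA : sm A. Proof. exact: sm_fsinv. Qed.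
Let gg0 : fc gg 0%N = 0. Proof. exact: fc_Xmul0. Qed.
Let gg1 : fc gg 1%N = 1. Proof. by rewrite fc_X_mul fc_fsinv0. Qed.
Let smgg : sm gg. Proof. by apply: smM => //; apply: smX. Qed.

Local Notation beta := (compf b gg).
Local Notation beta' := (compf (fder b) gg).
Local Notation Q := (compf (Df b) gg).
Local Notation c1 := (compf d1 gg).
Local Notation DA := (Df A).
Local Notation DC := (Df C).
Local Notation gam := (beta - fX * A * beta').
Local Notation r1g := (compf r1 gg).

Let E3 : DA * C + A * DC = Q + beta' * (fX * DA).
Proof.
rewrite /DA /DC -DfM // HC /beta /Q /beta' Df_compf //.
by rewrite /gg DfM ?DfX ?mul0r ?add0r //; apply: smX.
Qed.

Let E4 : DA = - (A * A) * Df a.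
Proof. by apply: Df_inv. Qed.

Let c10 : fc c1 0%N = 1. Proof. by rewrite fc_compf0. Qed.
Let gam0 : fc gam 0%N = 1.
Proof. by rewrite /gam fcB -mulrA fc_Xmul0 subr0 fc_compf0. Qed.

Lemma A_cancel x : A * x = 0 -> x = 0.
Proof. by move=> H; rewrite -[x]mul1r -E1 -mulrA H mulr0. Qed.

Definition P1c := c1 * Q = r1g * gam.
Definition P2c := c1 * DA = A ^+ 4 * r2.

Lemma P1_P1c : P1 -> P1c.
Proof.
move=> H; rewrite /P1c /c1 /Q -compfM // H compfM // compfB // compfM // compfX //.
Qed.

Lemma P1c_P1 : P1c -> P1.
Proof.
move=> H; apply/eqP; rewrite -subr_eq0; apply/eqP; apply: (@compf_inj gg) => //.
rewrite compfB // !compfM // compfB // compfM // compfX //.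
by move: H; rewrite /P1c /gam /gg /c1 /Q /r1g /beta /beta' => ->; rewrite subrr.
Qed.

Lemma P2_P2c : P2 -> P2c.
Proof.
move=> H; rewrite /P2c E4.
have -> : c1 * (- (A * A) * Df a) = (a * A) ^+ 2 * (c1 * (- (A * A) * Df a)).
  by rewrite E1 expr1n mul1r.
have -> : (a * A) ^+ 2 * (c1 * (- (A * A) * Df a)) = - (A ^+ 4 * ((a ^+ 2 * c1) * Df a)) by ring.
by rewrite E5 H; ring.
Qed.

Lemma P2c_P2 : P2c -> P2.
Proof.
move=> H; rewrite /P2.
have HDa : Df a = - (a ^+ 2) * DA.
  rewrite E4; have -> : - a ^+ 2 * (- (A * A) * Df a) = (a * A) ^+ 2 * Df a by ring.
  by rewrite E1 expr1n mul1r.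
rewrite HDa -E5.
have -> : a ^+ 2 * c1 * (- a ^+ 2 * DA) = - (a ^+ 4 * (c1 * DA)) by ring.
rewrite H; have -> : a ^+ 4 * (A ^+ 4 * r2) = (a * A) ^+ 4 * r2 by ring.
by rewrite E1 expr1n mul1r.
Qed.

Lemma dirA : P1c -> P2c -> DC = 0.
Proof.
move=> H1 H2; apply: A_cancel; apply: A_cancel; apply: (unit_cancel c10).
have T1 : A * DC = Q + beta' * (fX * DA) - DA * C by rewrite -E3; ring.
have -> : c1 * (A * (A * DC)) = A * (c1 * Q) + (c1 * DA) * (fX * A * beta') - (c1 * DA) * (A * C).
  by rewrite T1; ring.
by rewrite H1 H2 HC E6; ring.
Qed.

Lemma dirB : P1c -> DC = 0 -> P2c.
Proof.
move=> H1 H3.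
have T2 : DA * C = Q + beta' * (fX * DA) by rewrite -E3 H3 mulr0 addr0.
apply/eqP; rewrite -subr_eq0; apply/eqP; apply: (unit_cancel gam0).
have -> : gam * (c1 * DA - A ^+ 4 * r2) = A * c1 * (DA * C) - c1 * DA * (fX * A * beta') - gam * (A ^+ 4 * r2) + c1 * DA * (beta - A * C) by ring.
rewrite T2 HC subrr mulr0 addr0.
have -> : A * c1 * (Q + beta' * (fX * DA)) - c1 * DA * (fX * A * beta') - gam * (A ^+ 4 * r2) = A * (c1 * Q) - gam * (A ^+ 4 * r2) by ring.
by rewrite H1 E6; ring.
Qed.

Lemma dirC : P2c -> DC = 0 -> P1c.
Proof.
move=> H2 H3.
have T2 : DA * C = Q + beta' * (fX * DA) by rewrite -E3 H3 mulr0 addr0.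
apply/eqP; rewrite -subr_eq0; apply/eqP; apply: A_cancel.
have T3 : Q = DA * C - beta' * (fX * DA) by rewrite T2; ring.
rewrite T3.
have -> : A * (c1 * (DA * C - beta' * (fX * DA)) - r1g * gam) = (c1 * DA) * (A * C) - (c1 * DA) * (fX * A * beta') - A * (r1g * gam) by ring.
by rewrite H2 HC E6; ring.
Qed.

Lemma core12 : P1 -> P2 -> P3.
Proof. by move=> H1 H2; apply: dirA; [apply: P1_P1c | apply: P2_P2c]. Qed.
Lemma core13 : P1 -> P3 -> P2.
Proof. by move=> H1 H3; apply: P2c_P2; apply: dirB => //; apply: P1_P1c. Qed.
Lemma core23 : P2 -> P3 -> P1.
Proof. by move=> H2 H3; apply: P1c_P1; apply: dirC => //; apply: P2_P2c. Qed.

Lemma core_all : [/\ P1 -> P2 -> P3, P1 -> P3 -> P2 & P2 -> P3 -> P1].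
Proof using All. by split; [exact: core12 | exact: core13 | exact: core23]. Qed.

End Core.

Definition fshift (f : fps) := FPS (fun k => fc f k.+1).

Lemma sm_Cform a b : sm a -> sm b ->
  sm (fconst 1 * fsinv (fsinv a) + fX * compf (fshift b) (fX * fsinv a)).
Proof using All.
move=> ha hb; apply: smD; apply: smM.
- exact: smC.
- by do 2 apply: sm_fsinv.
- exact: smX.
- apply: sm_compf; first by move=> n; apply: hb.
  by apply: smM; [apply: smX | apply: sm_fsinv].
Qed.

End Der.

Implicit Types s t : lser K.

Definition F (s : lser K) := FPS (lcoef s).
Definition toF (m : int) (s : lser K) := FPS (fun k => coef s (k%:Z - m)).

Lemma coef_neg s (n : int) : n < lval s -> coef s n = 0.
Proof.
move=> H; rewrite /coef; case E: (n - lval s) => [k|k] //.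
exfalso; move: E H; lia.
Qed.

Lemma coef_pos s (k : nat) : coef s (lval s + k%:Z) = lcoef s k.
Proof. by rewrite /coef (addrC (lval s)) addrK. Qed.

Lemma toFE (m : int) s (a : nat) : a%:Z = m + lval s -> toF m s = fX ^+ a * F s.
Proof.
move=> Ha; apply: fps_ext => k; rewrite fc_Xn_mul /toF /=.
case: (leqP a k) => ak.
  have -> : k%:Z - m = lval s + (k - a)%N%:Z by lia.
  exact: coef_pos.
by apply: coef_neg; lia.
Qed.

Lemma lseq_toF (m : int) s t (a b : nat) : a%:Z = m + lval s -> b%:Z = m + lval t ->
  toF m s = toF m t -> lseq s t.
Proof.
move=> Ha Hb H n; case: (lerP 0 (n + m)) => hn.
  have [k Hk] : exists k : nat, n = k%:Z - m.
    by exists (absz (n + m)); rewrite gez0_abs // addrK.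
  by have := congr1 (fun f => fc f k) H; rewrite /= -Hk.
by rewrite !coef_neg //; lia.
Qed.

Lemma toF_of_lseq m s t : lseq s t -> toF m s = toF m t.
Proof. by move=> H; apply: fps_ext => k /=; rewrite H. Qed.

Lemma coef_ladd s t (n : int) : coef (ladd s t) n = coef s n + coef t n.
Proof.
rewrite /ladd; set v := (if _ then _ else _).
have hv : v <= lval s /\ v <= lval t.
  by rewrite /v; case: ifP => h; split => //; lia.
case: hv => hv1 hv2; clearbody v.
case: (lerP v n) => hn.
  have [k ->] : exists k : nat, n = v + k%:Z.
    by exists (absz (n - v)); rewrite gez0_abs ?subr_ge0 // addrCA subrr addr0.
  by rewrite (coef_pos (LS v _) k).
by rewrite !coef_neg ?addr0 //; lia.
Qed.

Lemma coef_lopp s (n : int) : coef (lopp s) n = - coef s n.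
Proof. by rewrite /coef /=; case: (n - lval s) => // k; rewrite oppr0. Qed.

Lemma coef_lscale c s (n : int) : coef (lscale c s) n = c * coef s n.
Proof. by rewrite /coef /=; case: (n - lval s) => // k; rewrite mulr0. Qed.

Lemma coef_lmapc (Dm : K -> K) s (n : int) : Dm 0 = 0 -> coef (lmapc Dm s) n = Dm (coef s n).
Proof. by move=> D0; rewrite /coef /=; case: (n - lval s) => // k. Qed.

Lemma toF_ladd m s t : toF m (ladd s t) = toF m s + toF m t.
Proof. by apply: fps_ext => k; rewrite fcD /= coef_ladd. Qed.
Lemma toF_lopp m s : toF m (lopp s) = - toF m s.
Proof. by apply: fps_ext => k; rewrite fcN /= coef_lopp. Qed.
Lemma toF_lsub m s t : toF m (lsub s t) = toF m s - toF m t.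
Proof. by rewrite /lsub toF_ladd toF_lopp. Qed.
Lemma toF_lscale m c s : toF m (lscale c s) = fconst c * toF m s.
Proof. by apply: fps_ext => k; rewrite fc_constM /= coef_lscale. Qed.
Lemma toF_lmapc m (Dm : K -> K) s : Dm 0 = 0 -> toF m (lmapc Dm s) = Df Dm (toF m s).
Proof. by move=> D0; apply: fps_ext => k; rewrite /= coef_lmapc. Qed.

Lemma toF_lmul m m1 m2 s t (a1 a2 : nat) : m = m1 + m2 ->
  a1%:Z = m1 + lval s -> a2%:Z = m2 + lval t ->
  toF m (lmul s t) = toF m1 s * toF m2 t.
Proof.
move=> hm H1 H2; rewrite (toFE H1) (toFE H2) (@toFE _ _ (a1 + a2)); last first.
  by rewrite /= PoszD H1 H2 hm; ring.
have -> : F (lmul s t) = F s * F t by [].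
by rewrite exprD; ring.
Qed.

Lemma toF_lX m k (a : nat) : a%:Z = m + k -> toF m (lX K k) = fX ^+ a.
Proof. by move=> H; rewrite (@toFE m (lX K k) a H) mulr1. Qed.

Lemma toF_lconst m c (a : nat) : a%:Z = m -> toF m (lconst c) = fX ^+ a * fconst c.
Proof. by move=> H; rewrite (@toFE _ _ a) // addr0. Qed.

Lemma toF_linv m s (a : nat) : a%:Z = m - lval s ->
  toF m (linv_monic s) = fX ^+ a * fsinv (F s).
Proof. by move=> H; rewrite (@toFE m (linv_monic s) a H). Qed.

Lemma lval_lpow s n : lval (lpow s n) = n%:Z * lval s.
Proof. by elim: n => [|n IH] /=; rewrite ?mul0r // IH intS mulrDl mul1r. Qed.

Lemma F_lpow s n : F (lpow s n) = F s ^+ n.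
Proof. by elim: n => [|n IH] //; rewrite exprS -IH. Qed.

Lemma toF_lpow m s n (a : nat) : a%:Z = m + n%:Z * lval s ->
  toF m (lpow s n) = fX ^+ a * F s ^+ n.
Proof. by move=> H; rewrite (toFE (a := a)) ?F_lpow // lval_lpow. Qed.


Lemma F_lcomp (f g : lser K) : lval f = -1 -> lval g = 1 ->
  F (lcomp f g) = fconst (lcoef f 0%N) * fsinv (F g) + fX * compf (fshift (F f)) (fX * F g).
Proof.
move=> hf hg; apply: fps_ext => j; rewrite fcD fc_constM fc_X_mul.
rewrite /= hf big_ord_recl /=.
congr (_ + _).
  congr (_ * _).
  have -> : coef (lmul (linv_monic g) (lone K)) (-1 + j%:Z) = fc (toF 1 (lpow (linv_monic g) 1)) j.
    by rewrite /toF /= addrC.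
  by rewrite (@toF_lpow _ _ _ 0) ?expr1 ?mul1r //= hg.
case: j => [|j]; first by rewrite big_ord0.
apply: eq_bigr => k _; rewrite /bump /= add1n subn1 /=.
congr (_ * _).
have -> : coef (lpow g k) (-1 + j.+1%:Z) = fc (toF 1 (lpow g k)) j.+1.
  by rewrite /toF /= addrC.
rewrite (@toF_lpow _ _ _ k.+1); last by rewrite hg; lia.
by rewrite exprS -mulrA fc_X_mul exprMn.
Qed.
End FPS.

Lemma inv_iff (K : comNzRingType) (e u x y : fps K) : e * u = 1 -> (x = y * u <-> e * x = y).
Proof.
move=> eu; split => [->|H]; first by rewrite mulrCA eu mulr1.
by rewrite -[x]mul1r -eu -H; ring.
Qed.

Lemma fc_mul0 (K : comNzRingType) (f g : fps K) : fc (f * g) 0%N = fc f 0%N * fc g 0%N.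
Proof. by rewrite fcM big_ord1. Qed.

Lemma fshiftE (K : comNzRingType) (f : fps K) : f = fconst (fc f 0%N) + fX K * fshift f.
Proof. by apply: fps_ext => -[|n]; rewrite fcD fc_X_mul /= ?addr0 ?add0r. Qed.

Section Main.
Variables (R : realType) (W : Type) (w0 : W).
Let Wp : pointedType :=
  HB.pack_for pointedType W (isPointed.Build W w0) (gen_eqMixin W) (gen_choiceMixin W).
Let K : comNzRingType := (Wp -> R : comNzRingType).

Variables (smooth : (W -> R) -> Prop) (Dx Dy : (W -> R) -> (W -> R))
    (z zx zy : W -> R) (psi phi : nat -> W -> R).
Hypothesis HGT : GT_covering smooth Dx Dy z zx zy.
Hypothesis Hcon : diff_connected smooth Dx Dy.
Hypothesis Hpsi : forall k, (0 < k)%N -> smooth (psi k).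
Hypothesis Hphi : forall k, (0 < k)%N -> smooth (phi k).

Let Hc : forall c : R, smooth (fun _ => c). Proof. by case: HGT. Qed.
Let Hcl : forall f g, smooth f -> smooth g ->
    [/\ smooth (f + g), smooth (- f) & smooth (f * g)].
Proof. by case: HGT. Qed.
Let Hder : is_derivation smooth Dx /\ is_derivation smooth Dy.
Proof. by case: HGT. Qed.
Let Hzx : smooth zx. Proof. by case: HGT => _ _ _ _ []. Qed.
Let Hzy : smooth zy. Proof. by case: HGT => _ _ _ _ []. Qed.

Let smK : K -> Prop := smooth.

Let S0 : smooth (0 : K). Proof. exact: (Hc 0). Qed.
Let S1 : smooth (1 : K). Proof. exact: (Hc 1). Qed.
Let SD : forall x y : K, smooth x -> smooth y -> smooth (x + y).
Proof. by move=> x y hx hy; case: (Hcl hx hy). Qed.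
Let SN : forall x : K, smooth x -> smooth (- x).
Proof. by move=> x hx; case: (Hcl hx hx). Qed.
Let SM : forall x y : K, smooth x -> smooth y -> smooth (x * y).
Proof. by move=> x y hx hy; case: (Hcl hx hy). Qed.

Section OneD.
Variable D : (W -> R) -> (W -> R).
Hypothesis HD : is_derivation smooth D.
Let DK : K -> K := D.
Let DS : forall x : K, smooth x -> smooth (D x). Proof. by case: HD. Qed.
Let D0 : D (0 : K) = 0. Proof. by case: HD => _ h _ _; exact: (h 0). Qed.
Let D1 : D (1 : K) = 0. Proof. by case: HD => _ h _ _; exact: (h 1). Qed.
Let DD : forall x y : K, smooth x -> smooth y -> D (x + y) = D x + D y.
Proof. by case: HD. Qed.
Let DM : forall x y : K, smooth x -> smooth y -> D (x * y) = D x * y + x * D y.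
Proof. by case: HD. Qed.

Lemma core_inst (a b C d1 e r1 r2 : fps K) :
  fc a 0%N = 1 -> fc b 0%N = 1 -> fc d1 0%N = 1 ->
  sm smK a -> sm smK b -> sm smK C ->
  fsinv a * C = compf b (fX K * fsinv a) ->
  a ^+ 2 * compf d1 (fX K * fsinv a) = e ->
  compf r1 (fX K * fsinv a) = fsinv a ^+ 3 * r2 ->
  [/\ P1 DK b d1 r1 -> P2 DK a e r2 -> P3 DK C,
      P1 DK b d1 r1 -> P3 DK C -> P2 DK a e r2
    & P2 DK a e r2 -> P3 DK C -> P1 DK b d1 r1].
Proof. exact: (core_all S0 S1 SD SN SM DS D0 D1 DD DM). Qed.

Lemma sm_Cform_inst (a b : fps K) : sm smK a -> sm smK b ->
  sm smK (fconst 1 * fsinv (fsinv a) + fX K * compf (fshift b) (fX K * fsinv a)).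
Proof. exact: (@sm_Cform K smK DK S0 S1 SD SN SM DS D0 D1 DD DM). Qed.

Lemma D0_inst : D (0 : K) = 0. Proof. exact: D0. Qed.
End OneD.


Local Notation ps := (psiS psi : lser K).
Local Notation ph := (phiS phi : lser K).
Local Notation a := (F ph).
Local Notation b := (F ps).
Local Notation A := (fsinv a).
Local Notation gg := (fX K * A).
Local Notation den := (ladd (lmul ph ph) (ladd (lscale (- (zx : K)) ph) (lconst (- (zy : K))))).
Local Notation den1 := (ladd (lX K (-2)) (ladd (lscale (- (zx : K)) (lX K (-1))) (lconst (- (zy : K))))).
Local Notation ee := (a * a + (fconst (- (zx : K)) * (fX K * a) + fX K ^+ 2 * fconst (- (zy : K)))).
Local Notation dd1 := (fX K ^+ 0 + (fconst (- (zx : K)) * fX K ^+ 1 + fX K ^+ 2 * fconst (- (zy : K)))).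
Local Notation dps := (lopp (lmul (lX K 2) (lder ps))).
Local Notation r1y := (fX K ^+ 2 * (fX K ^+ 0 - fX K ^+ 1 * fconst (zx : K))).
Local Notation r2y := (fX K ^+ 2 * (a - fX K * fconst (zx : K))).
Local Notation gl := (linv_monic ph).
Local Notation CC := (F (lcomp ps gl)).

Let a0 : fc a 0%N = 1. Proof. by []. Qed.
Let b0 : fc b 0%N = 1. Proof. by []. Qed.
Let sm_a : sm smK a.
Proof. by move=> [|[|n]] /=; [exact: S1 | exact: S0 | apply: Hphi]. Qed.
Let sm_b : sm smK b.
Proof. by move=> [|[|n]] /=; [exact: S1 | exact: S0 | apply: Hpsi]. Qed.

Let toF1_ph : toF 1 ph = a.
Proof. by rewrite (@toFE _ _ _ 0%N) // mul1r. Qed.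
Let toF2_ph : toF 2 ph = fX K * a.
Proof. by rewrite (@toFE _ _ _ 1%N) // expr1. Qed.
Let toF1_ps : toF 1 ps = b.
Proof. by rewrite (@toFE _ _ _ 0%N) // mul1r. Qed.

Let toF2_den : toF 2 den = ee.
Proof.
rewrite !toF_ladd (toF_lmul (m1 := 1) (m2 := 1) (a1 := 0) (a2 := 0) _ _ _) //.
by rewrite toF_lscale toF2_ph (toF_lconst (a := 2) _) // toF1_ph ?expr0 ?mul1r.
Qed.
Let Fden : F den = ee.
Proof. by rewrite -toF2_den (@toFE _ _ _ 0%N) // mul1r. Qed.

Let toF2_den1 : toF 2 den1 = dd1.
Proof.
rewrite !toF_ladd (toF_lX (a := 0) _) // toF_lscale (toF_lX (a := 1) _) //.
by rewrite (toF_lconst (a := 2) _).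
Qed.
Let Fden1 : F den1 = dd1.
Proof. by rewrite -toF2_den1 (@toFE _ _ _ 0%N) // mul1r. Qed.

Let fcXn_mul0 k (f : fps K) : fc (fX K ^+ k.+1 * f) 0%N = 0.
Proof. by rewrite fc_Xn_mul. Qed.

Let ee0 : fc ee 0%N = 1.
Proof.
by rewrite !fcD !fc_mul0 a0 (_ : fc (fX K) 0%N = 0) //; ring.
Qed.
Let dd10 : fc dd1 0%N = 1.
Proof.
by rewrite !fcD !fc_mul0 expr0 fc1 /=; ring.
Qed.

Let Flder : - F (lder ps) = b - fX K * fder b.
Proof.
apply: fps_ext => -[|n]; rewrite fcN fcB fc_X_mul /=.
  by rewrite mulrN1z opprK subr0.
have -> : (-1 + (n.+1)%:Z) = Posz n by lia.
by rewrite /= mulrSr pmulrn; ring.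
Qed.

Let toF0_dps : toF 0 dps = b - fX K * fder b.
Proof.
rewrite toF_lopp (toF_lmul (m1 := -2) (m2 := 2) (a1 := 0) (a2 := 0) _ _ _) //.
by rewrite (toF_lX (a := 0) _) // (@toFE _ _ _ 0%N) // !expr0 !mul1r Flder.
Qed.

Lemma lseq_iff1 (s t : lser K) (n1 n2 : nat) : n1%:Z = 1 + lval s -> n2%:Z = 1 + lval t ->
  (lseq s t <-> toF 1 s = toF 1 t).
Proof. by move=> h1 h2; split; [exact: toF_of_lseq | exact: lseq_toF h1 h2]. Qed.

Let D0x : Dx (0 : K) = 0. Proof. exact: (D0_inst Hder.1). Qed.
Let D0y : Dy (0 : K) = 0. Proof. exact: (D0_inst Hder.2). Qed.

Lemma cond2_iff : cond2 Dx Dy zx zy phi <->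
  P2 (Dx : K -> K) a ee (fX K ^+ 3) /\ P2 (Dy : K -> K) a ee r2y.
Proof.
have u1 : ee * fsinv ee = 1 by apply: fsinvK.
rewrite /cond2.
change ((lseq (lmapc (Dx : K -> K) ph) (lopp (linv_monic den)) /\
         lseq (lmapc (Dy : K -> K) ph) (lopp (lmul (lsub ph (lconst (zx : K))) (linv_monic den)))) <->
  P2 (Dx : K -> K) a ee (fX K ^+ 3) /\ P2 (Dy : K -> K) a ee r2y).
rewrite /P2 (lseq_iff1 (n1 := 0) (n2 := 3) _ _) // (lseq_iff1 (n1 := 0) (n2 := 2) _ _) //.
rewrite !toF_lopp !toF_lmapc // toF1_ph (toF_linv (a := 3) _) // Fden.
rewrite (toF_lmul (m1 := 1) (m2 := 0) (a1 := 0) (a2 := 2) _ _ _) // toF_lsub toF1_ph.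
rewrite (toF_lconst (a := 1) _) // (toF_linv (a := 2) _) // Fden.
have -> : - (fX K ^+ 3 * fsinv ee) = (- fX K ^+ 3) * fsinv ee by ring.
have -> : - ((a - fX K ^+ 1 * fconst (zx : K)) * (fX K ^+ 2 * fsinv ee)) = (- r2y) * fsinv ee by ring.
by rewrite (inv_iff _ _ u1) (inv_iff _ _ u1).
Qed.

Lemma cond1_iff : cond1 Dx Dy zx zy psi <->
  P1 (Dx : K -> K) b dd1 (fX K ^+ 3) /\ P1 (Dy : K -> K) b dd1 r1y.
Proof.
have u1 : dd1 * fsinv dd1 = 1 by apply: fsinvK.
rewrite /cond1.
change ((lseq (lmapc (Dx : K -> K) ps) (lmul dps (linv_monic den1)) /\
         lseq (lmapc (Dy : K -> K) ps)
           (lmul (lmul (lsub (lX K (-1)) (lconst (zx : K))) dps) (linv_monic den1))) <->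
  P1 (Dx : K -> K) b dd1 (fX K ^+ 3) /\ P1 (Dy : K -> K) b dd1 r1y).
rewrite /P1 (lseq_iff1 (n1 := 0) (n2 := 3) _ _) // (lseq_iff1 (n1 := 0) (n2 := 2) _ _) //.
rewrite !toF_lmapc // toF1_ps.
rewrite (toF_lmul (m1 := 0) (m2 := 1) (a1 := 0) (a2 := 3) _ _ _) // toF0_dps (toF_linv (a := 3) _) // Fden1.
rewrite (toF_lmul (m1 := 1) (m2 := 0) (a1 := 0) (a2 := 2) _ _ _) //.
rewrite (toF_lmul (m1 := 1) (m2 := 0) (a1 := 0) (a2 := 0) _ _ _) // toF0_dps.
rewrite toF_lsub (toF_lX (a := 0) _) // (toF_lconst (a := 1) _) // (toF_linv (a := 2) _) // Fden1.
have -> : (b - fX K * fder b) * (fX K ^+ 3 * fsinv dd1) = (fX K ^+ 3 * (b - fX K * fder b)) * fsinv dd1 by ring.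
have -> : (fX K ^+ 0 - fX K ^+ 1 * fconst (zx : K)) * (b - fX K * fder b) * (fX K ^+ 2 * fsinv dd1) = (r1y * (b - fX K * fder b)) * fsinv dd1 by ring.
by rewrite (inv_iff _ _ u1) (inv_iff _ _ u1).
Qed.


Let CCE : CC = fconst 1 * fsinv (fsinv a) + fX K * compf (fshift b) (fX K * fsinv a).
Proof. by rewrite F_lcomp //; exact: fc_fsinv0. Qed.

Let smCC : sm smK CC.
Proof. by rewrite CCE; exact: (sm_Cform_inst Hder.1 sm_a sm_b). Qed.

Let aA : a * A = 1. Proof. exact: fsinvK. Qed.
Let gg0 : fc gg 0%N = 0. Proof. exact: fc_Xmul0. Qed.

Let HCf : A * CC = compf b gg.
Proof.
have AA : A * fsinv A = 1 by apply: fsinvK; exact: fc_fsinv0.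
rewrite CCE [in RHS](fshiftE b) compfD // compfC // compfM // compfX // b0 fconst1.
by rewrite mulrDr mul1r AA; ring.
Qed.

Let E5f : a ^+ 2 * compf dd1 gg = ee.
Proof.
rewrite !compfD // !compfM // !compfXn // !compfC //.
have -> : a ^+ 2 * (gg ^+ 0 + (fconst (- (zx : K)) * gg ^+ 1 + gg ^+ 2 * fconst (- (zy : K)))) =
  a * a + (fconst (- (zx : K)) * (fX K * a) * (a * A) + fX K ^+ 2 * fconst (- (zy : K)) * (a * A) ^+ 2) by ring.
by rewrite aA expr1n !mulr1.
Qed.

Let E6x : compf (fX K ^+ 3) gg = A ^+ 3 * fX K ^+ 3.
Proof. by rewrite compfXn //; ring. Qed.

Let E6y : compf r1y gg = A ^+ 3 * r2y.
Proof.
rewrite compfM // !compfXn // compfB // compfM // !compfXn // compfC //.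
have -> : A ^+ 3 * r2y = fX K ^+ 2 * A ^+ 2 * (a * A) - A ^+ 3 * fX K ^+ 3 * fconst (zx : K) by ring.
by rewrite aA; ring.
Qed.

Lemma cond3_iff : cond3 psi phi <-> P3 (Dx : K -> K) CC /\ P3 (Dy : K -> K) CC.
Proof.
rewrite /cond3 /P3.
change ((forall n : int, exists c : R, coef (lcomp ps gl) n = ((fun _ => c) : K)) <->
  Df (Dx : K -> K) CC = 0 /\ Df (Dy : K -> K) CC = 0).
split.
  move=> H; split; apply: fps_ext => k; rewrite fc0.
    have [c Hc'] := H (lval (lcomp ps gl) + k%:Z); rewrite coef_pos in Hc'.
    change ((Dx : K -> K) (lcoef (lcomp ps gl) k) = 0); rewrite Hc'.
    by case: Hder => -[_ h _ _] _; exact: h c.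
  have [c Hc'] := H (lval (lcomp ps gl) + k%:Z); rewrite coef_pos in Hc'.
  change ((Dy : K -> K) (lcoef (lcomp ps gl) k) = 0); rewrite Hc'.
  by case: Hder => _ [_ h _ _]; exact: h c.
move=> [Hx Hy] n; case: (ltrP n (-1)) => hn.
  by exists 0; rewrite coef_neg.
have -> : n = lval (lcomp ps gl) + (absz (n + 1))%:Z.
  by rewrite gez0_abs /=; [rewrite addrCA addNr addr0 | lia].
rewrite coef_pos; apply: Hcon.
- exact: smCC.
- by have := congr1 (fun f => fc f (absz (n + 1))) Hx.
- by have := congr1 (fun f => fc f (absz (n + 1))) Hy.
Qed.

Theorem main_inh :
  [/\ cond1 Dx Dy zx zy psi -> cond2 Dx Dy zx zy phi -> cond3 psi phi,
      cond1 Dx Dy zx zy psi -> cond3 psi phi -> cond2 Dx Dy zx zy phi &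
      cond2 Dx Dy zx zy phi -> cond3 psi phi -> cond1 Dx Dy zx zy psi].
Proof.
have [X1 X2 X3] := core_inst Hder.1 a0 b0 dd10 sm_a sm_b smCC HCf E5f E6x.
have [Y1 Y2 Y3] := core_inst Hder.2 a0 b0 dd10 sm_a sm_b smCC HCf E5f E6y.
split.
- move=> /cond1_iff [h1 h1'] /cond2_iff [h2 h2']; apply/cond3_iff.
  by split; [exact: X1 | exact: Y1].
- move=> /cond1_iff [h1 h1'] /cond3_iff [h3 h3']; apply/cond2_iff.
  by split; [exact: X2 | exact: Y2].
- move=> /cond2_iff [h2 h2'] /cond3_iff [h3 h3']; apply/cond1_iff.
  by split; [exact: X3 | exact: Y3].
Qed.

End Main.


Unset Implicit Arguments.

Theorem mainTheorem10 (R : realType) (W : Type)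
    (smooth : (W -> R) -> Prop) (Dx Dy : (W -> R) -> (W -> R))
    (z zx zy : W -> R) (psi phi : nat -> W -> R) :
  GT_covering smooth Dx Dy z zx zy ->
  diff_connected smooth Dx Dy ->
  (forall k, (0 < k)%N -> smooth (psi k)) ->
  (forall k, (0 < k)%N -> smooth (phi k)) ->
  [/\ cond1 Dx Dy zx zy psi -> cond2 Dx Dy zx zy phi -> cond3 psi phi,
      cond1 Dx Dy zx zy psi -> cond3 psi phi -> cond2 Dx Dy zx zy phi &
      cond2 Dx Dy zx zy phi -> cond3 psi phi -> cond1 Dx Dy zx zy psi].
Proof.
move=> HGT Hcon Hpsi Hphi.
case: (pselect (inhabited W)) => [[w0]|nW].
  exact: (main_inh w0 HGT Hcon Hpsi Hphi).
have feq : forall f g : W -> R, f = g.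
  by move=> f g; apply: funext => w; exfalso; apply: nW; exact: (inhabits w).
split=> _ _.
- by move=> n; exists 0; apply: feq.
- by rewrite /cond2 /=; split=> n; apply: feq.
- by rewrite /cond1 /=; split=> n; apply: feq.
Qed.
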